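(* For every $m\ge2$, $\mathbf{E}_m\subseteq\mathbf{T}_m^1$.
   Context: All varieties are varieties of monoids (signature: associative binary operation and identity constant $1$); identities are pairs of words over a countably infinite set of variables, and variables may be substituted by $1$. $\mathbf{O}$ is the variety defined by $xyt_1xt_2y \approx yxt_1xt_2y$, $xt_1xyt_2y \approx xt_1yxt_2y$, $xt_1yt_2xy \approx xt_1yt_2yx$. For $m\ge1$, $\mathbf{E}_m$ is the subvariety of $\mathbf{O}$ defined additionally by $x^{m+1}\approx x^m$ and $x^mt\approx tx^m$. For $m\ge2$, a semigroup is $m$-testable if it satisfies every semigroup identity $\mathbf{u}\approx\mathbf{v}$ (between nonempty words) such that $\mathbf{u},\mathbf{v}$ have the same prefix of length $m-1$, the same suffix of length $m-1$, and the same set of factors of length $m$. $T_m$ is a finite semigroup generating the variety of all $m$-testable semigroups; $T_m$ satisfies an identity iff these three conditions hold for it. $T_m^1$ is $T_m$ with an external identity element adjoined, and $\mathbf{T}_m^1$ is the monoid variety generated by $T_m^1$. *)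

(* Defs.v *)
From mathcomp Require Import all_boot.
Set Implicit Arguments. Unset Strict Implicit. Unset Printing Implicit Defensive.

Record monoid := Monoid {
  mcar :> Type;
  mop : mcar -> mcar -> mcar;
  mone : mcar;
  mopA : forall a b c, mop a (mop b c) = mop (mop a b) c;
  mop1l : forall a, mop mone a = a;
  mop1r : forall a, mop a mone = a }.

Record semigroup := Semigroup {
  scar :> Type;
  sop : scar -> scar -> scar;
  sopA : forall a b c, sop a (sop b c) = sop (sop a b) c }.

Definition word := seq nat.

Definition meval (M : monoid) (f : nat -> M) (w : word) : M :=
  foldr (fun x acc => mop (f x) acc) (mone M) w.

(** Monoid identity u ~ v holds in M (variables may take value 1). *)
Definition mholds (M : monoid) (u v : word) : Prop :=
  forall f : nat -> M, meval f u = meval f v.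

Definition seval (S : semigroup) (f : nat -> S) (w : word) : option S :=
  match w with
  | [::] => None
  | x :: w' => Some (foldl (fun a y => sop a (f y)) (f x) w')
  end.

Definition sholds (S : semigroup) (u v : word) : Prop :=
  forall f : nat -> S, seval f u = seval f v.

(** S^1 : S with an external identity adjoined (None). *)
Definition adj_op (S : semigroup) (a b : option S) : option S :=
  match a, b with
  | None, _ => b
  | _, None => a
  | Some x, Some y => Some (sop x y)
  end.

Lemma adj_opA (S : semigroup) (a b c : option S) :
  adj_op a (adj_op b c) = adj_op (adj_op a b) c.
Proof. by case: a => [a|]; case: b => [b|]; case: c => [c|] //=; rewrite sopA. Qed.

Lemma adj_op1l (S : semigroup) (a : option S) : adj_op None a = a.
Proof. by []. Qed.

Lemma adj_op1r (S : semigroup) (a : option S) : adj_op a None = a.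
Proof. by case: a. Qed.

Definition adjoin_one (S : semigroup) : monoid :=
  @Monoid (option S) (@adj_op S) None (@adj_opA S) (@adj_op1l S) (@adj_op1r S).

Definition prefix_len (k : nat) (w : word) : word := take k w.
Definition suffix_len (k : nat) (w : word) : word := drop (size w - k) w.

Definition testable_cond (m : nat) (u v : word) : Prop :=
  [/\ prefix_len m.-1 u = prefix_len m.-1 v,
      suffix_len m.-1 u = suffix_len m.-1 v &
      forall s : word, size s = m -> infix s u = infix s v].

(** T is a semigroup satisfying exactly the m-testable identities
    (the defining property of T_m given in the paper). *)
Definition is_Tm (m : nat) (T : semigroup) : Prop :=
  forall u v : word, u != [::] -> v != [::] ->
    (sholds T u v <-> testable_cond m u v).

(** Membership of a monoid in the variety generated by the monoid A:
    M satisfies every identity of A (Birkhoff: var A = Mod (Id A)). *)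
Definition in_var_gen (A M : monoid) : Prop :=
  forall u v : word, mholds A u v -> mholds M u v.

Definition vx := 0. Definition vy := 1. Definition vt1 := 2. Definition vt2 := 3.

Definition in_O (M : monoid) : Prop :=
  [/\ mholds M [:: vx; vy; vt1; vx; vt2; vy] [:: vy; vx; vt1; vx; vt2; vy],
      mholds M [:: vx; vt1; vx; vy; vt2; vy] [:: vx; vt1; vy; vx; vt2; vy] &
      mholds M [:: vx; vt1; vy; vt2; vx; vy] [:: vx; vt1; vy; vt2; vy; vx]].

Definition in_E (m : nat) (M : monoid) : Prop :=
  [/\ in_O M,
      mholds M (nseq m.+1 vx) (nseq m vx) &
      mholds M (rcons (nseq m vx) vt1) (vt1 :: nseq m vx)].

(* Main.v *)
Require Import Defs.
From mathcomp Require Import all_boot zify.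
Set Implicit Arguments. Unset Strict Implicit. Unset Printing Implicit Defensive.

Section Mon.
Variable M : monoid.

Lemma meval_cat (f : nat -> M) (a b : word) : meval f (a ++ b) = mop (meval f a) (meval f b).
Proof. elim: a => [|x a IH] /=; first by rewrite mop1l. by rewrite IH mopA. Qed.

Lemma mh_refl u : mholds M u u. Proof. by []. Qed.
Lemma mh_sym u v : mholds M u v -> mholds M v u. Proof. by move=> H f; rewrite H. Qed.
Lemma mh_trans u v w : mholds M u v -> mholds M v w -> mholds M u w.
Proof. by move=> H1 H2 f; rewrite H1 H2. Qed.
Lemma mh_ctx c d u v : mholds M u v -> mholds M (c ++ u ++ d) (c ++ v ++ d).
Proof. by move=> H f; rewrite !meval_cat H. Qed.

Definition subst (s : nat -> word) (l : word) := flatten (map s l).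
Lemma meval_subst (f : nat -> M) s l : meval f (subst s l) = meval (fun i => meval f (s i)) l.
Proof. elim: l => //= i l IH; by rewrite /subst /= meval_cat -IH. Qed.
Lemma mh_inst s l r : mholds M l r -> mholds M (subst s l) (subst s r).
Proof. move=> H f; rewrite !meval_subst; exact: H. Qed.

Definition sg4 x y (t1 t2 : word) := fun i => nth [::] [:: [:: x]; [:: y]; t1; t2] i.

Lemma inst4 l r x y t1 t2 c d : mholds M l r ->
  mholds M (c ++ subst (sg4 x y t1 t2) l ++ d) (c ++ subst (sg4 x y t1 t2) r ++ d).
Proof. by move=> H; apply: mh_ctx; apply: mh_inst. Qed.

Lemma swap_O (HO : in_O M) c a b d : a \in c ++ d -> b \in c ++ d ->
  mholds M (c ++ a :: b :: d) (c ++ b :: a :: d).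
Proof.
case: HO => H1 H2 H3.
have [->|neab] := eqVneq a b; first by move=> _ _; apply: mh_refl.
rewrite !mem_cat => /orP[] Ha /orP[] Hb.
-
  move: Hb; case/splitPr: Ha => c1 c2.
  rewrite mem_cat inE [b == a]eq_sym (negbTE neab) /= => /orP[] Hb.
  + case/splitPr: Hb => e1 e2.
    have := inst4 b a e2 c2 e1 d H3; rewrite /subst /sg4 /vx /vy /vt1 /vt2 /=; repeat (rewrite -catA /=); move=> H; repeat (rewrite -catA /=).
    exact: mh_sym.
  + case/splitPr: Hb => e1 e2.
    have := inst4 a b e1 e2 c1 d H3; rewrite /subst /sg4 /vx /vy /vt1 /vt2 /=; repeat (rewrite -catA /=); move=> H; repeat (rewrite -catA /=).
    exact: H.
-
  case/splitPr: Ha => c1 c2; case/splitPr: Hb => d1 d2.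
  have := inst4 a b c2 d1 c1 d2 H2; rewrite /subst /sg4 /vx /vy /vt1 /vt2 /=; repeat (rewrite -catA /=); move=> H; repeat (rewrite -catA /=).
  exact: H.
-
  case/splitPr: Ha => d1 d2; case/splitPr: Hb => c1 c2.
  have := inst4 b a c2 d1 c1 d2 H2; rewrite /subst /sg4 /vx /vy /vt1 /vt2 /=; repeat (rewrite -catA /=); move=> H; repeat (rewrite -catA /=).
  exact: mh_sym.
- move: Hb; case/splitPr: Ha => d1 d2.
  rewrite mem_cat inE [b == a]eq_sym (negbTE neab) /= => /orP[] Hb.
  + case/splitPr: Hb => e1 e2.
    have := inst4 b a e1 e2 c d2 H1; rewrite /subst /sg4 /vx /vy /vt1 /vt2 /=; repeat (rewrite -catA /=); move=> H; repeat (rewrite -catA /=).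
    exact: mh_sym.
  + case/splitPr: Hb => e1 e2.
    have := inst4 a b d1 e1 c e2 H1; rewrite /subst /sg4 /vx /vy /vt1 /vt2 /=; repeat (rewrite -catA /=); move=> H; repeat (rewrite -catA /=).
    exact: H.
Qed.


Lemma cnt_mem (a e : nat) c d : a != e -> 1 < count_mem a (c ++ a :: e :: d) -> a \in c ++ d.
Proof.
move=> ne; case: (boolP (a \in c ++ d)) => // /count_memPn.
rewrite !count_cat /= eqxx; move: ne; rewrite eq_sym => /negbTE ->; lia.
Qed.

Lemma cnt_mem2 (a e : nat) c d : a != e -> 1 < count_mem e (c ++ a :: e :: d) -> e \in c ++ d.
Proof.
move=> ne; case: (boolP (e \in c ++ d)) => // /count_memPn.
rewrite !count_cat /= eqxx; move: ne => /negbTE ->; lia.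
Qed.

Variable HO : in_O M.

Lemma swapW W0 c a b d : perm_eq (c ++ a :: b :: d) W0 ->
  1 < count_mem a W0 -> 1 < count_mem b W0 ->
  mholds M (c ++ a :: b :: d) (c ++ b :: a :: d).
Proof.
move=> P; rewrite -!(permP P) => Ha Hb.
have [->|neab] := eqVneq a b; first exact: mh_refl.
by apply: swap_O => //; [apply: cnt_mem Ha | apply: cnt_mem2 Hb].
Qed.

Lemma moveW W0 r c a d : perm_eq (c ++ a :: r ++ d) W0 ->
  (forall y, y \in a :: r -> 1 < count_mem y W0) ->
  mholds M (c ++ a :: r ++ d) (c ++ r ++ a :: d).
Proof.
elim: r c => [|y r IH] c P H /=; first exact: mh_refl.
apply: mh_trans (_ : mholds M (c ++ y :: a :: r ++ d) _).
  apply: (swapW P); apply: H; rewrite !inE eqxx ?orbT //.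
have := IH (rcons c y); rewrite !cat_rcons; apply.
  apply: perm_trans P; rewrite perm_cat2l.
  by apply/permPl; exact: (perm_catCA [:: y] [:: a] (r ++ d)).
move=> z; rewrite inE => /orP[/eqP->|zr]; apply: H; rewrite !inE ?eqxx ?zr ?orbT //.
Qed.

Lemma permW W0 s s' c d : perm_eq s s' -> perm_eq (c ++ s ++ d) W0 ->
  (forall y, y \in s -> 1 < count_mem y W0) ->
  mholds M (c ++ s ++ d) (c ++ s' ++ d).
Proof.
elim: s s' c => [|a s IH] s' c Pss P H.
  by case: s' Pss => [_|? ? /perm_size //]; apply: mh_refl.
have Ha : a \in s' by rewrite -(perm_mem Pss) inE eqxx.
move: Pss; case/splitPr: Ha => s1 s2 Pss.
have E : perm_eq (s1 ++ a :: s2) (a :: s1 ++ s2).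
  by apply/permPl; exact: (perm_catCA s1 [:: a] s2).
have {Pss}Pss' := perm_trans Pss E; rewrite perm_cons in Pss'.
apply: mh_trans (_ : mholds M (c ++ a :: (s1 ++ s2) ++ d) _).
  have := IH _ (rcons c a) Pss'; rewrite !cat_rcons; apply => //.
  by move=> y ys; apply: H; rewrite inE ys orbT.
rewrite -catA.
have := moveW (W0 := W0) (r := s1) (c := c) (a := a) (d := s2 ++ d).
rewrite -catA /=; apply.
  apply: perm_trans P; rewrite perm_cat2l /= perm_cons catA perm_cat2r.
  by rewrite perm_sym.
move=> y; rewrite inE => /orP[/eqP->|ys]; apply: H; first by rewrite inE eqxx.
by rewrite inE (perm_mem Pss') mem_cat ys orbT.
Qed.


Lemma subst_nseq x y t1 t2 k : subst (sg4 x y t1 t2) (nseq k vx) = nseq k x.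
Proof. by elim: k => //= k IH; rewrite /subst /= in IH *; rewrite IH. Qed.

Lemma subst_rcons s l i : subst s (rcons l i) = subst s l ++ s i.
Proof. by rewrite /subst map_rcons -cats1 flatten_cat /= cats0. Qed.

Lemma filter_pred1_nseq (x : nat) s : filter (pred1 x) s = nseq (count_mem x s) x.
Proof. by elim: s => //= y s IH; case: eqP => [->|] //=; rewrite IH. Qed.

Lemma filter_cat_inv (P : pred nat) W p r : filter P W = p ++ r ->
  exists W1 W2, [/\ W = W1 ++ W2, filter P W1 = p & filter P W2 = r].
Proof.
elim: W p => [|a W IH] p /=.
  by case: p r => [|? ?] [|? ?] //= _; exists [::], [::].
case: ifP => Pa.
  case: p => [|b p] /=.
    by move=> E; exists [::], (a :: W); rewrite /= Pa E.
  case=> <- /IH [W1 [W2 [-> F1 F2]]].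
  by exists (a :: W1), W2; rewrite /= Pa F1.
move=> /IH [W1 [W2 [-> F1 F2]]].
by exists (a :: W1), W2; rewrite /= Pa F1.
Qed.

Lemma rcons_nseq k (x : nat) : rcons (nseq k x) x = nseq k.+1 x.
Proof. by elim: k => //= k ->. Qed.

Variable m : nat.
Variable HP : mholds M (nseq m.+1 vx) (nseq m vx).
Variable HC : mholds M (rcons (nseq m vx) vt1) (vt1 :: nseq m vx).

Lemma powM x : mholds M (nseq m.+1 x) (nseq m x).
Proof. by have := mh_inst (sg4 x x [::] [::]) HP; rewrite !subst_nseq. Qed.

Lemma centM x r : mholds M (nseq m x ++ r) (r ++ nseq m x).
Proof.
have := mh_inst (sg4 x x r r) HC.
rewrite subst_rcons (_ : subst _ (vt1 :: _) = sg4 x x r r vt1 ++ subst (sg4 x x r r) (nseq m vx)) //.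
by rewrite subst_nseq.
Qed.

Lemma absorbM x r : mholds M (nseq m x ++ r) (nseq m x ++ [seq y <- r | y != x]).
Proof.
elim: r => [|y r IH] /=; first exact: mh_refl.
case: eqP => [->|ne].
  apply: mh_trans _ IH.
  rewrite -cat_rcons rcons_nseq.
  exact: (mh_ctx [::] r (powM x)).
apply: mh_trans (_ : mholds M (y :: nseq m x ++ r) _).
  by have := mh_ctx [::] r (centM x [:: y]); rewrite /= -catA.
apply: mh_trans (_ : mholds M (y :: nseq m x ++ [seq z <- r | z != x]) _).
  by have := mh_ctx [:: y] [::] IH; rewrite /= !cats0.
have := mh_ctx [::] [seq z <- r | z != x] (centM x [:: y]); rewrite /= -catA => H.
exact: mh_sym H.
Qed.

Definition Qx (L : pred nat) (x : nat) := fun y => (y == x) || L y.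

Lemma extract1 (L : pred nat) x W : ~~ L x ->
  infix (nseq m x) (filter (Qx L x) W) ->
  (forall y, y \in W -> ~~ L y -> 1 < count_mem y W) ->
  mholds M W (nseq m x ++ [seq y <- W | y != x]).
Proof.
move=> nLx /infixP [p [q Hf]] NL.
have [W1 [W23 [EW F1 F23]]] := filter_cat_inv Hf.
have [s0 [W3 [E23 Fs F3]]] := filter_cat_inv F23.
subst W W23.
have s0L : forall y, y \in s0 -> ~~ L y.
  move=> y ys; apply/negP => Ly.
  have : y \in filter (Qx L x) s0 by rewrite mem_filter /Qx Ly orbT ys.
  by rewrite Fs mem_nseq => /andP[_ /eqP Eyx]; move: nLx; rewrite -Eyx Ly.
have cx : count_mem x s0 = m.
  have := congr1 (count_mem x) Fs; rewrite count_nseq /= eqxx mul1n count_filter.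
  by move=> <-; apply: eq_count => y /=; rewrite /Qx; case: eqP => //= ->; rewrite eqxx.
set s1 := [seq y <- s0 | y != x].
have Ps : perm_eq s0 (nseq m x ++ s1).
  rewrite -cx -filter_pred1_nseq perm_sym; apply/permPl; exact: perm_filterC.
apply: mh_trans (_ : mholds M (W1 ++ (nseq m x ++ s1) ++ W3) _).
  apply: (permW (W0 := W1 ++ s0 ++ W3)) => //.
  move=> y ys; apply: NL; last exact: s0L.
  by rewrite !mem_cat ys orbT.
apply: mh_trans (_ : mholds M (nseq m x ++ W1 ++ s1 ++ W3) _).
  have := mh_ctx [::] (s1 ++ W3) (centM x W1); rewrite /= -!catA => H.
  exact: mh_sym H.
apply: mh_trans (absorbM x (W1 ++ s1 ++ W3)) _.
rewrite !filter_cat /s1 filter_id; exact: mh_refl.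
Qed.

Lemma extractA (L : pred nat) (A : seq nat) W : uniq A ->
  (forall x, x \in A -> ~~ L x /\ infix (nseq m x) (filter (Qx L x) W)) ->
  (forall y, y \in W -> ~~ L y -> 1 < count_mem y W) ->
  mholds M W (flatten [seq nseq m x | x <- A] ++ [seq y <- W | y \notin A]).
Proof.
elim: A W => [|x A IH] W /=.
  move=> _ _ _; rewrite (_ : [seq y <- W | y \notin [::]] = W); first exact: mh_refl.
  by rewrite -[RHS]filter_predT; apply: eq_filter.
case/andP=> xA uA HA NL.
have [nLx abx] := HA x (mem_head _ _).
apply: mh_trans (extract1 nLx abx NL) _.
rewrite -catA.
suff H : mholds M [seq y <- W | y != x] (flatten [seq nseq m x0 | x0 <- A] ++ [seq y <- W | y \notin x :: A]).
  by have := mh_ctx (nseq m x) [::] H; rewrite !cats0.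
set W' := [seq y <- W | y != x].
have -> : [seq y <- W | y \notin x :: A] = [seq y <- W' | y \notin A].
  rewrite /W' -filter_predI; apply: eq_filter => y /=; rewrite inE negb_or andbC.
  by [].
apply: IH => //.
  move=> x' x'A; have [nL ab] := HA x' (mem_behead (s := x :: A) x'A); split => //.
  rewrite /W' -filter_predI (eq_filter (a2 := Qx L x')) //.
  move=> y /=; rewrite /Qx; case: eqP => [->|] /=.
    by case: eqP => // Ex; move: xA; rewrite -Ex x'A.
  by case Ly: (L y) => //= _; apply/eqP => Eyx; move: nLx; rewrite -Eyx Ly.
move=> y; rewrite /W' mem_filter => /andP[yx yW] nLy.
rewrite count_filter (eq_count (a2 := pred1 y)) ?NL // => z /=.
by case: eqP => // ->; rewrite yx.
Qed.

End Mon.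

Fixpoint blocks (L : pred nat) (w : word) : seq word :=
  match w with
  | [::] => [:: [::]]
  | x :: w' => let r := blocks L w' in
      if L x then [::] :: r else (x :: head [::] r) :: behead r
  end.

Fixpoint weave (bs : seq word) (ts : word) : word :=
  match bs with
  | [::] => [::]
  | b :: bs' => match ts with [::] => b | t :: ts' => b ++ t :: weave bs' ts' end
  end.

Lemma blocks_nil L w : blocks L w = head [::] (blocks L w) :: behead (blocks L w).
Proof. by case: w => //= x w; case: (L x). Qed.

Lemma size_blocks L w : size (blocks L w) = (size (filter L w)).+1.
Proof.
elim: w => //= x w IH; case: (L x) => /=; rewrite ?IH //.
by move: IH; case: (blocks L w).
Qed.

Lemma weave_cons y b bs ts : weave ((y :: b) :: bs) ts = y :: weave (b :: bs) ts.
Proof. by case: ts. Qed.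

Lemma filter_weave (L Q : pred nat) w : (forall y, L y -> Q y) ->
  filter Q w = weave (map (filter Q) (blocks L w)) (filter L w).
Proof.
move=> LQ; elim: w => [|x w IH] //.
case Lx: (L x).
  have -> : blocks L (x :: w) = [::] :: blocks L w by rewrite /= Lx.
  have -> : filter L (x :: w) = x :: filter L w by rewrite /= Lx.
  by rewrite /= (LQ _ Lx) IH.
have -> : blocks L (x :: w) = (x :: head [::] (blocks L w)) :: behead (blocks L w).
  by rewrite /= Lx.
have -> : filter L (x :: w) = filter L w by rewrite /= Lx.
move: IH; rewrite [in X in X -> _](blocks_nil L w).
set hr := head [::] _; set tl := behead _ => IH.
have -> : map (filter Q) ((x :: hr) :: tl) = filter Q (x :: hr) :: map (filter Q) tl by [].
case Qx: (Q x).
  have -> : filter Q (x :: hr) = x :: filter Q hr by rewrite /= Qx.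
  by rewrite weave_cons -IH /= Qx.
have -> : filter Q (x :: hr) = filter Q hr by rewrite /= Qx.
by rewrite -IH /= Qx.
Qed.

Lemma weave_blocks L w : weave (blocks L w) (filter L w) = w.
Proof.
have := filter_weave (L := L) (Q := predT) w (fun _ _ => erefl).
rewrite filter_predT (eq_map (fun s => filter_predT s)) map_id => E.
by rewrite {3}E.
Qed.

Lemma flatten_blocks L w : flatten (blocks L w) = filter (predC L) w.
Proof.
elim: w => //= x w IH; case: (L x) => //=.
by rewrite -IH [in RHS](blocks_nil L w).
Qed.

Lemma blocks_filter (L P : pred nat) w : (forall y, L y -> P y) ->
  blocks L (filter P w) = map (filter P) (blocks L w).
Proof.
move=> LP; elim: w => //= x w IH.
case Px: (P x) => /=.
  case Lx: (L x) => /=; first by rewrite IH.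
  by rewrite IH Px -behead_map; case: (blocks L w).
case Lx: (L x); first by move: (LP _ Lx); rewrite Px.
rewrite IH /= Px; by rewrite [in LHS](blocks_nil L w).
Qed.

Section Mon2.
Variable M : monoid.
Variable HO : in_O M.

Lemma sortW W0 bs ts c d : perm_eq (c ++ weave bs ts ++ d) W0 ->
  (forall y, y \in flatten bs -> 1 < count_mem y W0) ->
  mholds M (c ++ weave bs ts ++ d) (c ++ weave (map (sort leq) bs) ts ++ d).
Proof.
elim: bs ts c => [|b bs IH] ts c P H /=; first exact: mh_refl.
have Pb : perm_eq b (sort leq b) by rewrite perm_sym; apply/permPl; exact: perm_sort.
case: ts P => [|t ts] P.
  apply: (permW HO Pb P) => y yb; apply: H; rewrite /= mem_cat yb //.
apply: mh_trans (_ : mholds M (c ++ sort leq b ++ t :: weave bs ts ++ d) _).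
  rewrite -?catA /= -?catA in P *.
  apply: (permW HO Pb P) => y yb; apply: H; rewrite /= mem_cat yb //.
have := IH ts (c ++ sort leq b ++ [:: t]); rewrite -!catA /=; apply.
  apply: perm_trans P; rewrite -!catA perm_cat2l /= -cat_cons perm_cat2r /=.
  by rewrite perm_sym.
by move=> y yb; apply: H; rewrite /= mem_cat yb orbT.
Qed.

Lemma canonW (L : pred nat) w : (forall y, y \in w -> ~~ L y -> 1 < count_mem y w) ->
  mholds M w (weave (map (sort leq) (blocks L w)) (filter L w)).
Proof.
move=> NL.
have := sortW (W0 := w) (bs := blocks L w) (ts := filter L w) (c := [::]) (d := [::]).
rewrite /= !cats0 weave_blocks; apply => //.
by move=> y; rewrite flatten_blocks mem_filter => /andP[nL yw]; apply: NL.
Qed.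
End Mon2.

Lemma strip_infix (a : nat) s p w : a \notin p -> infix (a :: s) (p ++ w) -> infix (a :: s) w.
Proof.
elim: p => //= y p IH; rewrite inE negb_or => /andP[ay ap].
rewrite (negbTE ay) /=; exact: IH.
Qed.

Lemma infix_head1 (a : nat) u Y : a \notin Y -> infix (a :: u) (a :: Y) -> prefix u Y.
Proof.
move=> aY; rewrite infix_consl prefix_cons eqxx /= => /orP[//|].
by move/mem_infix => /(_ a (mem_head _ _)); rewrite (negbTE aY).
Qed.

Lemma prefix_nseq2 (x a a' : nat) d d' r : a != x -> a' != x ->
  prefix (nseq d x ++ [:: a]) (nseq d' x ++ a' :: r) -> d = d'.
Proof.
move=> ax a'x; elim: d d' => [|d IH] [|d'] //=.
- by rewrite ?prefix_cons (negbTE ax).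
- by rewrite ?prefix_cons eq_sym (negbTE a'x).
- by rewrite ?prefix_cons eqxx /= => /IH ->.
Qed.

Lemma prefix_nseq3 (x a' : nat) k d' r : a' != x ->
  prefix (nseq k x) (nseq d' x ++ a' :: r) -> k <= d'.
Proof.
move=> a'x; elim: k d' => [|k IH] [|d'] //=.
- by rewrite ?prefix_cons eq_sym (negbTE a'x).
- by rewrite ?prefix_cons eqxx /= => /IH.
Qed.

Lemma ext_infix (T : eqType) (s A : seq T) n : size s <= n -> n <= size A -> infix s A ->
  exists r, [/\ size r = n, infix s r & infix r A].
Proof.
move=> sn nA /infixP [p [q EA]]; subst A.
rewrite !size_cat in nA.
case: (leqP (n - size s) (size q)) => hq.
  exists (s ++ take (n - size s) q); split.
  - by rewrite size_cat size_takel // subnKC.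
  - exact: prefix_infix.
  - by rewrite -{2}(cat_take_drop (n - size s) q) (catA s) infix_infix.
exists (drop (size p - (n - size s - size q)) p ++ s ++ q); split.
- rewrite !size_cat size_drop; lia.
- exact: infix_infix.
- rewrite -[in X in infix _ X](cat_take_drop (size p - (n - size s - size q)) p) -catA.
  by apply: infix_catl; exact: infix_refl.
Qed.

Lemma win m (A B s : seq nat) : testable_cond m A B -> m <= size A -> size s <= m ->
  infix s A -> infix s B.
Proof.
case=> _ _ Hi mA sm sA.
have [r [rs sr rA]] := ext_infix sm mA sA.
by apply: infix_trans sr _; rewrite -(Hi r rs).
Qed.

Lemma testable_sym m A B : testable_cond m A B -> testable_cond m B A.
Proof. by case=> H1 H2 H3; split => // s sz; rewrite H3. Qed.

Lemma cnt_nseq m (y : nat) k l : testable_cond m (nseq k y) (nseq l y) -> k < m -> l = k.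
Proof.
case=> Hp _ Hi km.
have lm : l < m.
  rewrite ltnNge; apply/negP => ml.
  have : infix (nseq m y) (nseq l y).
    by rewrite -(subnKC ml) nseqD prefix_infix.
  by rewrite -Hi ?size_nseq // => /size_infix; rewrite !size_nseq; lia.
move: Hp; rewrite /prefix_len !take_oversize ?size_nseq; try lia.
by move/(congr1 size); rewrite !size_nseq.
Qed.

Lemma uniq_adj (z z' : seq nat) : uniq z -> uniq z' -> size z = size z' ->
  (forall a b, infix [:: a; b] z -> infix [:: a; b] z') -> head 0 z = head 0 z' -> z = z'.
Proof.
elim: z z' => [|t r IH] [|t' r'] //= /andP[tr ur] /andP[tr' ur'] [sz] Hadj Eh.
subst t'.
case: r IH tr ur sz Hadj => [|t2 r2] IH tr ur sz Hadj.
  by case: r' tr' ur' sz Hadj.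
have H2 : infix [:: t; t2] (t :: r') by apply: Hadj; exact: (prefix_infix [:: t; t2] r2).
move: (infix_head1 tr' H2) => {H2}; case: r' tr' ur' sz Hadj => [|t2' r2'] //= tr' ur' sz Hadj.
rewrite ?prefix_cons => /andP[/eqP E _]; subst t2'.
congr (_ :: _); apply: IH => //.
move=> a b ab.
have : infix [:: a; b] (t :: t2 :: r2') by apply: Hadj; exact: (infix_catl [:: t] ab).
rewrite ?infix_consl ?prefix_cons => /orP[/andP[/eqP Eat _]|//].
subst a; move: tr; rewrite (mem_infix ab) //; exact: mem_head.
Qed.

Definition Wd (x : nat) (D : seq nat) (S : word) := weave (map (fun d => nseq d x) D) S.

Lemma mem_Wd x D S z : z \in Wd x D S -> (z == x) || (z \in S).
Proof.
elim: D S => [|d D IH] [|s S] //=.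
  by rewrite /Wd /= mem_nseq => /andP[_ ->].
rewrite /Wd /= mem_cat mem_nseq inE => /orP[/andP[_ ->]//|/orP[zs|/IH]].
  by rewrite inE zs orbT.
by case/orP=> H; rewrite ?inE H ?orbT.
Qed.

Lemma BC m (x s0 : nat) S D D' : uniq (s0 :: S) -> x \notin s0 :: S ->
  size D = (size S).+1 -> size D' = (size S).+1 ->
  all (fun d => d < m) D -> all (fun d => d < m) D' -> last 0 D = last 0 D' ->
  (forall a s, a != x -> size (a :: s) <= m ->
     infix (a :: s) (s0 :: Wd x D S) -> infix (a :: s) (s0 :: Wd x D' S)) ->
  D = D'.
Proof.
elim: S s0 D D' => [|s1 S IH] s0 [|d0 D] [|d0' D'] //=.
  case: D => [|? D] /=; last by move=> _ _ /eqP.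
  case: D' => [|? D'] /=; last by move=> _ _ _ /eqP.
  by move=> _ _ _ _ _ _ ->.
move=> /andP[s0S uS]; rewrite !inE !negb_or => /andP[xs0 /andP[xs1 xS]].
move=> [szD] [szD'] /andP[d0m Dm] /andP[d0m' Dm'] Hl Hw.
have s0s1 : s0 != s1 by apply: contraNneq s0S => ->; rewrite mem_head.
have s0S1 : s0 \notin S by apply: contra s0S; rewrite inE => ->; rewrite orbT.
have s0x : s0 != x by rewrite eq_sym.
have s0rest : forall D'', s0 \notin nseq d0' x ++ s1 :: Wd x D'' S.
  move=> D''; rewrite mem_cat negb_or mem_nseq (negbTE s0x) andbF /= inE negb_or s0s1 /=.
  by apply/negP => /mem_Wd; rewrite (negbTE s0x) (negbTE s0S1).
have Ed : d0 = d0'.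
  have Hw' : forall a s, a != x -> size (a :: s) <= m ->
      infix (a :: s) (s0 :: nseq d0 x ++ s1 :: Wd x D S) ->
      infix (a :: s) (s0 :: nseq d0' x ++ s1 :: Wd x D' S).
    by move=> a s ax sz H; exact: (Hw a s ax sz H).
  case: (leqP d0.+2 m) => hd.
    have H1 : infix (s0 :: nseq d0 x ++ [:: s1]) (s0 :: nseq d0 x ++ s1 :: Wd x D S).
      have -> : s0 :: nseq d0 x ++ s1 :: Wd x D S = (s0 :: nseq d0 x ++ [:: s1]) ++ Wd x D S.
        by rewrite /= -catA.
      exact: prefix_infix.
    have := Hw' _ _ s0x _ H1; rewrite /= size_cat size_nseq addn1 => /(_ hd).
    move=> /(infix_head1 (s0rest D')).
    by apply: prefix_nseq2; rewrite eq_sym.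
  have H1 : infix (s0 :: nseq m.-1 x) (s0 :: nseq d0 x ++ s1 :: Wd x D S).
    have -> : d0 = m.-1 by lia.
    by rewrite -cat_cons; exact: prefix_infix.
  have := Hw' _ _ s0x _ H1; rewrite /= size_nseq => /(_ ltac:(lia)).
  move=> /(infix_head1 (s0rest D')) /prefix_nseq3.
  rewrite eq_sym xs1 => /(_ isT); lia.
subst d0'; congr (_ :: _).
apply: (IH s1) => //.
- by rewrite inE negb_or xs1.
- by move: Hl; case: D {Dm Hw s0rest} szD => // e D _; case: D' {Dm'} szD' => // e' D' _.
move=> a s ax sz aW.
have : infix (a :: s) (s0 :: Wd x (d0 :: D) (s1 :: S)).
  change (infix (a :: s) ((s0 :: nseq d0 x) ++ (s1 :: Wd x D S))); exact: infix_catl.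
move=> /(Hw _ _ ax sz) H.
change (is_true (infix (a :: s) ((s0 :: nseq d0 x) ++ (s1 :: Wd x D' S)))) in H.
apply: strip_infix H.
rewrite inE negb_or mem_nseq negb_and ax orbT andbT.
have : a \in s1 :: Wd x D S by apply: (mem_infix aW); rewrite mem_head.
rewrite inE => /orP[/eqP->|/mem_Wd]; first by rewrite eq_sym.
by rewrite (negbTE ax) /= => aS; apply: contraNneq s0S1 => <-.
Qed.

Lemma infix_count (T : eqType) (y : T) (s t : seq T) : infix s t -> count_mem y s <= count_mem y t.
Proof. by case/infixP=> p [q ->]; rewrite !count_cat; lia. Qed.

Lemma ab_count m (Q : pred nat) x w : infix (nseq m x) (filter Q w) -> m <= count_mem x w.
Proof.
move/(infix_count x); rewrite count_nseq /= eqxx mul1n => H.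
apply: leq_trans H _; rewrite count_filter; apply: sub_count => z /andP[] //.
Qed.

Lemma mem_count (T : eqType) (y : T) s : y \in s -> 0 < count_mem y s.
Proof. by rewrite -has_pred1 has_count. Qed.

Lemma uniq_count1 (T : eqType) (s : seq T) : (forall z, z \in s -> count_mem z s <= 1) -> uniq s.
Proof.
elim: s => //= a s IH H; apply/andP; split.
  apply/negP => as_; have := H a (mem_head _ _); rewrite /= eqxx.
  by have := mem_count as_; lia.
apply: IH => z zs; have := H z (mem_behead (s := a :: s) zs); rewrite /=; lia.
Qed.

Lemma infix_weave (bs : seq word) ts b : size bs = (size ts).+1 -> b \in bs -> infix b (weave bs ts).
Proof.
elim: bs ts => [|b0 bs IH] [|t ts] //=.
  by case: bs {IH} => // _; rewrite inE => /eqP ->; apply: infix_refl.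
move=> [sz]; rewrite inE => /orP[/eqP ->|bb]; first exact: prefix_infix.
apply: infix_catl; apply: (infix_catl [:: t]); exact: IH.
Qed.

Lemma weave_rcons (bs : seq word) ts e : size bs = (size ts).+1 ->
  weave bs ts ++ [:: e] = weave (rcons bs [::]) (rcons ts e).
Proof.
elim: bs ts => [|b bs IH] [|t ts] //=.
  by case: bs {IH} => //= _; rewrite cats0.
by move=> [sz]; rewrite -catA /= IH.
Qed.

Lemma maxN (z : nat) s : z \in s -> z < (foldr maxn 0 s).+1.
Proof. elim: s => //= a s IH; rewrite inE => /orP[/eqP->|/IH]; lia. Qed.

Lemma uniq_pad N m (s : seq nat) : (forall z, z \in s -> z < N) -> uniq s ->
  uniq (iota N m ++ s ++ [:: N + m]).
Proof.
move=> Hs us; rewrite cat_uniq iota_uniq cat_uniq us /= andbT.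
apply/andP; split.
  apply/hasPn => z; rewrite mem_cat inE /= mem_iota => /orP[zs|/eqP->].
    by have := Hs z zs; lia.
  lia.
rewrite orbF; apply/negP => /(Hs (N + m)); lia.
Qed.

Section TS.
Variable T : semigroup.

Lemma foldl_sop (g : nat -> T) a b s :
  foldl (fun acc y => sop acc (g y)) (sop a b) s = sop a (foldl (fun acc y => sop acc (g y)) b s).
Proof. by elim: s a b => //= y s IH a b; rewrite -sopA IH. Qed.

Lemma seval_cons (g : nat -> T) x s : seval g (x :: s) = adj_op (Some (g x)) (seval g s).
Proof. by case: s => //= y s; rewrite foldl_sop. Qed.

Lemma meval_adj (g : nat -> T) (K : pred nat) w :
  meval (M := adjoin_one T) (fun y => if K y then Some (g y) else None) w = seval g (filter K w).
Proof.
elim: w => //= x w IH; case Kx: (K x) => /=; rewrite IH //.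
by have := seval_cons g x (filter K w); rewrite /= => <-.
Qed.

Variable m : nat.
Hypothesis hm : 1 < m.
Hypothesis HT : is_Tm m T.

Lemma HTlemma u v : mholds (adjoin_one T) u v ->
  forall K : pred nat, testable_cond m (filter K u) (filter K v).
Proof.
move=> H K.
have E : forall g : nat -> T, seval g (filter K u) = seval g (filter K v).
  by move=> g; rewrite -!meval_adj; apply: H.
have bad : forall q : word, q != [::] -> (forall g : nat -> T, seval g [::] = seval g q) -> False.
  move=> q qn Eg.
  have S01 : sholds T [:: 0] [:: 1].
    by move=> f; exfalso; have := Eg (fun _ => f 0); case: (q) qn.
  have := (@HT [:: 0] [:: 1] isT isT).1 S01; case=> Hp _ _.
  by move: Hp; rewrite /prefix_len; case: m hm => [|[|k]].
case Eu: (filter K u) => [|a s]; case Ev: (filter K v) => [|b t].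
- by split => // s _.
- by exfalso; apply: (bad (b :: t)) => // g; rewrite -Eu -Ev E.
- by exfalso; apply: (bad (a :: s)) => // g; rewrite -Eu -Ev E.
- by apply: (@HT (a :: s) (b :: t) isT isT).1 => g; rewrite -Eu -Ev E.
Qed.

Lemma pad_win u v (Huv : mholds (adjoin_one T) u v) N
  (HN : forall z, z \in u ++ v -> z < N) (Q : pred nat) s :
  size s <= m -> infix s (iota N m ++ filter Q u ++ [:: N + m]) ->
  infix s (iota N m ++ filter Q v ++ [:: N + m]).
Proof.
move=> sm.
have H2 := mh_ctx (iota N m) [:: N + m] Huv.
have := HTlemma H2 (fun z => Q z || (N <= z)).
have fe : forall w, (forall z, z \in w -> z < N) ->
    filter (fun z => Q z || (N <= z)) (iota N m ++ w ++ [:: N + m]) =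
    iota N m ++ filter Q w ++ [:: N + m].
  move=> w Hw; rewrite !filter_cat /= leq_addr orbT.
  rewrite (_ : filter _ (iota N m) = iota N m); last first.
    by apply/all_filterP/allP => z; rewrite mem_iota => /andP[-> _]; rewrite orbT.
  congr (_ ++ _ ++ _); apply: eq_in_filter => z /Hw zN.
  by rewrite leqNgt zN orbF.
rewrite !fe; last first.
- by move=> z zu; apply: HN; rewrite mem_cat zu.
- by move=> z zv; apply: HN; rewrite mem_cat zv orbT.
move=> Ht; apply: (win Ht) => //.
by rewrite !size_cat size_iota; lia.
Qed.
End TS.

Definition PadH m (u v : word) := forall N (Q : pred nat) s,
  (forall z, z \in u ++ v -> z < N) -> size s <= m ->
  infix s (iota N m ++ filter Q u ++ [:: N + m]) -> infix s (iota N m ++ filter Q v ++ [:: N + m]).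

Lemma uniq_lin (L : pred nat) w : (forall z, L z -> count_mem z w = 1) -> uniq (filter L w).
Proof.
move=> Lw; apply: uniq_count1 => z; rewrite mem_filter => /andP[Lz _].
rewrite -(Lw z Lz) count_filter; apply: sub_count => y /andP[] //.
Qed.

Lemma F3lem m (hm : 1 < m) (u v : word) (L : pred nat) (Hpad : PadH m u v)
  (Lu : forall z, L z = (count_mem z u == 1)) (Lv : forall z, L z = (count_mem z v == 1)) :
  filter L u = filter L v.
Proof.
set N := (foldr maxn 0 (u ++ v)).+1.
have HN : forall z, z \in u ++ v -> z < N by move=> z; exact: maxN.
have Lu' : forall z, L z -> count_mem z u = 1 by move=> z; rewrite Lu => /eqP.
have Lv' : forall z, L z -> count_mem z v = 1 by move=> z; rewrite Lv => /eqP.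
have E : iota N m ++ filter L u ++ [:: N + m] = iota N m ++ filter L v ++ [:: N + m].
  apply: uniq_adj.
  - apply: uniq_pad; last exact: uniq_lin.
    by move=> z; rewrite mem_filter => /andP[_ zu]; apply: HN; rewrite mem_cat zu.
  - apply: uniq_pad; last exact: uniq_lin.
    by move=> z; rewrite mem_filter => /andP[_ zv]; apply: HN; rewrite mem_cat zv orbT.
  - rewrite !size_cat; congr (_ + (_ + _)); apply: perm_size.
    apply: uniq_perm (uniq_lin Lu') (uniq_lin Lv') _.
    move=> z; rewrite !mem_filter; case Lz: (L z) => //=.
    by rewrite -!has_pred1 !has_count Lu' ?Lv'.
  - by move=> a b ab; apply: Hpad => //.
  - by have -> : iota N m = N :: iota N.+1 m.-1 by case: (m) hm.
move: E => /(congr1 (drop m)); rewrite !drop_size_cat ?size_iota // !cats1.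
by move/rcons_inj; case.
Qed.

Lemma BCapp m (hm : 1 < m) (u v : word) (L : pred nat) (Hpad : PadH m u v)
  (F3 : filter L u = filter L v) (Lu : forall z, L z -> count_mem z u = 1)
  y (nLy : ~~ L y) (nabu : ~~ infix (nseq m y) (filter (Qx L y) u))
  (nabv : ~~ infix (nseq m y) (filter (Qx L y) v)) :
  map (count_mem y) (blocks L u) = map (count_mem y) (blocks L v).
Proof.
set N := (foldr maxn 0 (y :: u ++ v)).+1.
have HN : forall z, z \in u ++ v -> z < N by move=> z zu; apply: maxN; rewrite inE zu orbT.
have yN : y < N by apply: maxN; rewrite mem_head.
set Q := Qx L y.
have Fz : forall w, filter Q w = Wd y (map (count_mem y) (blocks L w)) (filter L w).
  move=> w; rewrite (filter_weave (L := L) (Q := Q)) => [|z Lz]; last by rewrite /Q /Qx Lz orbT.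
  rewrite /Wd -map_comp; congr weave; apply/eq_in_map => b bb /=.
  rewrite -filter_pred1_nseq; apply: eq_in_filter => z zb.
  have : z \in flatten (blocks L w) by apply/flattenP; exists b.
  rewrite flatten_blocks mem_filter /= => /andP[nLz _].
  by rewrite /Q /Qx (negbTE nLz) orbF.
have allm : forall w, ~~ infix (nseq m y) (filter Q w) ->
    all (fun d => d < m) (map (count_mem y) (blocks L w)).
  move=> w nab; apply/allP => c /mapP [b bb ->].
  rewrite ltnNge; apply: contra nab => mc.
  rewrite Fz; apply: (@infix_trans _ (nseq (count_mem y b) y)).
    by rewrite -(subnKC mc) nseqD; apply: prefix_infix.
  rewrite /Wd; apply: infix_weave; first by rewrite !size_map size_blocks.
  by apply/mapP; exists (count_mem y b) => //; apply/mapP; exists b.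
set s0 := N + m.-1.
set ts := filter L u.
have ZE : forall w, filter L w = ts -> iota N m ++ filter Q w ++ [:: N + m] =
    iota N m.-1 ++ s0 :: Wd y (rcons (map (count_mem y) (blocks L w)) 0) (rcons ts (N + m)).
  move=> w Ew.
  have -> : iota N m = iota N m.-1 ++ [:: s0] by rewrite /s0 -{1}(ltn_predK hm) -addn1 iotaD.
  rewrite -catA /= Fz Ew /Wd map_rcons /= -weave_rcons //.
  by rewrite !size_map size_blocks Ew.
have ts_lt : forall z, z \in ts -> z < N.
  by move=> z; rewrite mem_filter => /andP[_ zu]; apply: HN; rewrite mem_cat zu.
apply: (@rcons_injl _ 0).
apply: (BC (m := m) (x := y) (s0 := s0) (S := rcons ts (N + m))).
- rewrite /= rcons_uniq mem_rcons !inE negb_or (uniq_lin Lu) andbT.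
  apply/andP; split; first (apply/andP; split).
  + by rewrite /s0; apply/eqP; lia.
  + by apply/negP => /ts_lt; rewrite /s0; lia.
  + by apply/negP => /ts_lt; lia.
- rewrite !inE mem_rcons inE !negb_or; apply/and3P; split.
  + by rewrite /s0; apply/eqP; lia.
  + by apply/eqP; lia.
  + by rewrite mem_filter negb_and nLy.
- by rewrite !size_rcons size_map size_blocks.
- by rewrite !size_rcons size_map size_blocks -F3.
- by rewrite all_rcons (allm _ nabu) andbT; lia.
- by rewrite all_rcons (allm _ nabv) andbT; lia.
- by rewrite !last_rcons.
move=> a s ay sz H.
have Hu : infix (a :: s) (iota N m ++ filter Q u ++ [:: N + m]).
  by rewrite ZE //; apply: infix_catl.
have := Hpad _ _ _ HN sz Hu; rewrite ZE; last by rewrite -F3.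
apply: strip_infix; rewrite mem_iota.
have : a \in s0 :: Wd y (rcons (map (count_mem y) (blocks L u)) 0) (rcons ts (N + m)).
  by apply: (mem_infix H); rewrite mem_head.
rewrite inE => /orP[/eqP->|/mem_Wd]; first by rewrite /s0; lia.
rewrite (negbTE ay) /= mem_rcons inE => /orP[/eqP ->|/ts_lt]; lia.
Qed.

Unset Implicit Arguments.

Theorem proposition5p3 (m : nat) (hm : 2 <= m) (T : semigroup) (HT : is_Tm m T) :
  forall M : monoid, in_E m M -> in_var_gen (adjoin_one T) M.
Proof.
move=> M [HO HPw HCw] u v Huv.
have HK := HTlemma hm HT Huv.
have Hpad : PadH m u v by move=> N Q s HN sz; apply: (pad_win hm HT Huv HN).
pose L := fun y => count_mem y u == 1.
have Cuv : forall y, count_mem y u < m -> count_mem y v = count_mem y u.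
  by move=> y; have := HK (pred1 y); rewrite !filter_pred1_nseq => H; apply: cnt_nseq H.
have Cvu : forall y, count_mem y v < m -> count_mem y u = count_mem y v.
  move=> y; have := testable_sym (HK (pred1 y)); rewrite !filter_pred1_nseq => H.
  exact: cnt_nseq H.
have Lv : forall y, L y = (count_mem y v == 1).
  move=> y; rewrite /L; apply/eqP/eqP => H.
    by have := Cuv y; rewrite H => ->.
  by have := Cvu y; rewrite H => ->.
pose ab w x := infix (nseq m x) (filter (Qx L x) w).
have Fab : forall x, ab v x = ab u x.
  by move=> x; have [_ _ H3] := HK (Qx L x); rewrite /ab H3 ?size_nseq.
pose A := undup (filter (ab u) u).
have HA : forall x, x \in A -> ~~ L x /\ ab u x.
  move=> x; rewrite mem_undup mem_filter => /andP[abx _]; split => //.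
  rewrite /L; apply/negP => /eqP E; have := ab_count abx; lia.
have HAv : forall x, x \in A -> ~~ L x /\ ab v x.
  by move=> x /HA [? ?]; rewrite Fab.
have NLu : forall y, y \in u -> ~~ L y -> 1 < count_mem y u.
  move=> y yu; rewrite /L => /eqP; have := mem_count yu; lia.
have NLv : forall y, y \in v -> ~~ L y -> 1 < count_mem y v.
  move=> y yv; rewrite Lv => /eqP; have := mem_count yv; lia.
have Xu := extractA HO HPw HCw (undup_uniq _) HA NLu.
have Xv := extractA HO HPw HCw (undup_uniq _) HAv NLv.
set X := flatten _ in Xu Xv.
have NLw : forall w, (forall y, y \in w -> ~~ L y -> 1 < count_mem y w) ->
    forall y, y \in [seq z <- w | z \notin A] -> ~~ L y ->
    1 < count_mem y [seq z <- w | z \notin A].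
  move=> w NL y; rewrite mem_filter => /andP[yA yw] nLy.
  rewrite count_filter (eq_count (a2 := pred1 y)) ?NL // => z /=.
  by case: eqP => // ->; rewrite yA.
have Cu := canonW HO (NLw _ NLu).
have Cv := canonW HO (NLw _ NLv).
set wu := [seq z <- u | z \notin A] in Xu Cu.
set wv := [seq z <- v | z \notin A] in Xv Cv.
suff E : weave (map (sort leq) (blocks L wu)) (filter L wu) =
         weave (map (sort leq) (blocks L wv)) (filter L wv).
  apply: mh_trans Xu _; apply: mh_sym; apply: mh_trans Xv _.
  have := mh_ctx X [::] Cu; have := mh_ctx X [::] Cv; rewrite !cats0 E => H1 H2.
  exact: mh_trans H1 (mh_sym H2).
have LA : forall y, L y -> y \notin A.
  by move=> y Ly; apply/negP => /HA [/negP].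
have fL : forall w, filter L [seq z <- w | z \notin A] = filter L w.
  move=> w; rewrite -filter_predI; apply: eq_filter => y /=.
  by case Ly: (L y) => //=; rewrite LA.
have F3 : filter L u = filter L v := F3lem hm Hpad (fun z => erefl) Lv.
rewrite /wu /wv !fL -F3.
rewrite !(blocks_filter (P := fun y => y \notin A)) //; congr weave.
rewrite -!map_comp; apply: (@eq_from_nth _ [::]); first by rewrite !size_map !size_blocks F3.
move=> i; rewrite size_map => hi.
have hi' : i < size (blocks L v) by rewrite size_blocks -F3 -size_blocks.
rewrite !(nth_map [::]) //=.
apply/perm_sortP; [exact: leq_total | exact: leq_trans | exact: anti_leq |].
rewrite /perm_eq; apply/allP => y _; apply/eqP.
rewrite !count_filter.
case yA: (y \in A).
  rewrite !(eq_count (a2 := pred0)) ?count_pred0 // => z /=;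
  by case: eqP => // ->; rewrite yA.
rewrite !(eq_count (a2 := pred1 y)); last first.
- by move=> z /=; case: eqP => // ->; rewrite yA.
- by move=> z /=; case: eqP => // ->; rewrite yA.
case Ly: (L y).
  have nb : forall w j, count_mem y (nth [::] (blocks L w) j) = 0.
    move=> w j; apply/count_memPn/negP => yb.
    case: (ltnP j (size (blocks L w))) => hj; last by move: yb; rewrite nth_default.
    have : y \in flatten (blocks L w) by apply/flattenP; exists (nth [::] (blocks L w) j) => //; exact: mem_nth.
    by rewrite flatten_blocks mem_filter /= Ly.
  by rewrite !nb.
have nab : ~~ ab u y.
  apply/negP => abu; move: yA; rewrite mem_undup mem_filter abu /=.
  by move/negbT/count_memPn => c0; have := ab_count abu; lia.
have nabv : ~~ ab v y by rewrite Fab.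
have Lu1 : forall z, L z -> count_mem z u = 1 by move=> z /eqP.
have := BCapp hm Hpad F3 Lu1 (negbT Ly) nab nabv.
move/(congr1 (fun s => nth 0 s i)); rewrite !(nth_map [::]) //.
Qed.
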